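(* Let $n,m\ge1$, $c_1,\dots,c_n>0$, $T>0$, $\epsilon>0$, $\kappa_{ij}\ge0$, $\bar r_1,\dots,\bar r_m>0$, $R=\prod_i[0,\bar r_i]$. For each $i$ let $p_i:\mathbb{R}\to[0,1]$ be continuous and nonincreasing with $p_i(\tau)=1$ for $\tau\le0$ and $p_i(\tau)\to0$ as $\tau\to\infty$, and let $U_i:[0,\bar r_i]\to\mathbb{R}$ be continuous, nondecreasing and strictly concave such that for every $\tau\in\mathbb{R}$, $\bar r_ip_i(\tau)$ is the maximizer of $U_i(r)-\tau r$ over $r\in[0,\bar r_i]$. Let $U^*_i(\tau)=\min_{r\in[0,\bar r_i]}[\tau r-U_i(r)]$, $\varphi^i_\epsilon(\mu)=-\epsilon\log\sum_je^{-(\kappa_{ij}+\mu_j)/\epsilon}$, and for $\mu\in[0,T)^n$ $$\mathcal{D}(\mu)=\sum_iU^*_i(\varphi^i_\epsilon(\mu))+\sum_jc_j\log\Big(1-\frac{\mu_j}{T}\Big).$$ Let $\mu_j(q_j)=0$ for $q_j\le c_j$, $\mu_j(q_j)=T(1-c_j/q_j)$ for $q_j>c_j$, and $\delta_{ij}(\mu)=e^{-(\kappa_{ij}+\mu_j)/\epsilon}/\sum_ke^{-(\kappa_{ik}+\mu_k)/\epsilon}$. Let $q:[0,\infty)\to\mathbb{R}^n$ be a solution of $$\dot q_j=\sum_i\bar r_ip_i(\varphi^i_\epsilon(\mu(q)))\,\delta_{ij}(\mu(q))-\frac{q_j}{T},\quad j=1,\dots,n,$$ and let $\mathcal{T}$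 be the set of times at which all functions $t\mapsto\mu_j(q_j(t))$ and $t\mapsto c_j\log(1-\mu_j(q_j(t))/T)$ are differentiable. Then for every $t\in\mathcal{T}$, $$\frac{d}{dt}\mathcal{D}(\mu(q(t)))=\sum_{j:\,q_j(t)>c_j}Tc_j\Big[\frac{\dot q_j(t)}{q_j(t)}\Big]^2\ge0,$$ and consequently $\mathcal{D}(\mu(q(t)))$ is non-decreasing in $t$.
   Context: $\mathcal{D}(\mu)=\min_{r\in R}W(r,\mu)$ where $W(r,\mu)=\sum_i[r_i\varphi^i_\epsilon(\mu)-U_i(r_i)]+\sum_jc_j\log(1-\mu_j/T)$. The complement of $\mathcal{T}$ in $[0,\infty)$ has Lebesgue measure zero. *)

(* Defs.v *)
From HB Require Import structures.
From mathcomp Require Import all_boot all_order all_algebra.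
From mathcomp Require Import all_classical all_reals all_analysis.
Set Implicit Arguments. Unset Strict Implicit. Unset Printing Implicit Defensive.
Import Order.TTheory GRing.Theory Num.Theory.
Import numFieldNormedType.Exports.
Local Open Scope classical_set_scope.
Local Open Scope ring_scope.

Section Defs.
Variable R : realType.

Definition Ustar (U : R -> R) (rbar tau : R) : R :=
  inf [set tau * r - U r | r in `[0, rbar]].

Definition phi_eps (n m : nat) (eps : R) (kappa : 'I_m -> 'I_n -> R)
  (i : 'I_m) (mu : 'I_n -> R) : R :=
  - eps * ln (\sum_(j < n) expR (- (kappa i j + mu j) / eps)).

Definition delta_eps (n m : nat) (eps : R) (kappa : 'I_m -> 'I_n -> R)
  (i : 'I_m) (j : 'I_n) (mu : 'I_n -> R) : R :=
  expR (- (kappa i j + mu j) / eps) /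
  \sum_(k < n) expR (- (kappa i k + mu k) / eps).

Definition mu_of (T cj qj : R) : R :=
  if qj <= cj then 0 else T * (1 - cj / qj).

Definition mu_vec (n : nat) (T : R) (c : 'I_n -> R) (q : 'I_n -> R) : 'I_n -> R :=
  fun j => mu_of T (c j) (q j).

Definition Dual (n m : nat) (eps T : R) (c : 'I_n -> R) (kappa : 'I_m -> 'I_n -> R)
  (rbar : 'I_m -> R) (U : 'I_m -> R -> R) (mu : 'I_n -> R) : R :=
  \sum_(i < m) Ustar (U i) (rbar i) (phi_eps eps kappa i mu)
  + \sum_(j < n) c j * ln (1 - mu j / T).

End Defs.

(* Main.v *)
Require Import Defs.
From HB Require Import structures.
From mathcomp Require Import all_boot all_order all_algebra.
From mathcomp Require Import all_classical all_reals all_analysis.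
Import Order.TTheory GRing.Theory Num.Theory.
Import numFieldNormedType.Exports.
Local Open Scope classical_set_scope.
Local Open Scope ring_scope.

From mathcomp Require Import ring lra.
Ltac fld := field; do ?[apply/andP; split]; by [].

Section Calc.
Context {R : realType}.
Implicit Types (f g : R -> R) (x a b : R).

Lemma dcomp f g x a b : is_derive (g x) 1 f a -> is_derive x 1 g b ->
  is_derive x 1 (fun y => f (g y)) (a * b).
Proof. move=> H1 H2; exact: (is_derive1_comp H1 H2). Qed.

Lemma dadd f g x a b : is_derive x 1 f a -> is_derive x 1 g b ->
  is_derive x 1 (fun y => f y + g y) (a + b).
Proof. move=> H1 H2; exact: (is_deriveD H1 H2). Qed.

Lemma dscale f x a (k : R) : is_derive x 1 f a -> is_derive x 1 (fun y => k * f y) (k * a).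
Proof. move=> H1; exact: (is_deriveZ k H1). Qed.

Lemma dcst x (k : R) : is_derive x 1 (fun _ : R => k) 0.
Proof. exact: (@is_derive_cst R R R k x 1). Qed.

Lemma did x : is_derive x 1 (fun y : R => y) 1.
Proof. exact: (@is_derive_id R R x 1). Qed.

Lemma dinv f x a : f x != 0 -> is_derive x 1 f a ->
  is_derive x 1 (fun y => (f y)^-1) (- (f x) ^- 2 * a).
Proof. move=> H1 H2; exact: (is_deriveV H1 H2). Qed.

Lemma dsum n (h : 'I_n -> R -> R) x (dh : 'I_n -> R) :
  (forall i, is_derive x 1 (h i) (dh i)) ->
  is_derive x 1 (fun y => \sum_(i < n) h i y) (\sum_(i < n) dh i).
Proof.
move=> H; have := is_derive_sum H.
suff -> : (\sum_(i < n) h i) = (fun y => \sum_(i < n) h i y) by [].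
by apply: funext => y; rewrite fct_sumE.
Qed.

Lemma dln f x a : 0 < f x -> is_derive x 1 f a ->
  is_derive x 1 (fun y => ln (f y)) ((f x)^-1 * a).
Proof. move=> H1 H2; apply: dcomp H2; exact: is_derive1_ln. Qed.

Lemma dexp f x a : is_derive x 1 f a ->
  is_derive x 1 (fun y => expR (f y)) (expR (f x) * a).
Proof. move=> H2; apply: dcomp H2; exact: is_derive_expR. Qed.

Lemma derive_cont f x a : is_derive x 1 f a -> {for x, continuous f}.
Proof. by case=> H _; apply: differentiable_continuous; apply/derivable1_diffP. Qed.

Lemma deriv_right_lb f x d e : is_derive x 1 f d -> 0 < e ->
  \forall y \near x, (x <= y -> f x + (d - e) * (y - x) <= f y) /\
                     (y <= x -> f y <= f x + (d - e) * (y - x)) .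
Proof.
move=> /is_derive1_caratheodory [g [gE gc gx]] e0.
have : \forall y \near x, d - e < g y.
  have gd : g @ x --> d by rewrite -gx; exact: gc.
  have := @cvgr_gt R R (nbhs x) _ g d gd (d - e).
  by rewrite ltrBlDr ltrDl; apply.
apply: filterS => y gy.
have -> : f y = f x + g y * (y - x) by rewrite -gE addrC subrK.
split => hy; rewrite lerD2l.
- by apply: ler_wpM2r; [rewrite subr_ge0|exact: ltW].
- by apply: ler_wnM2r; [rewrite subr_le0|exact: ltW].
Qed.



Lemma deriv_ub f x d e : is_derive x 1 f d -> 0 < e ->
  \forall y \near x, (x <= y -> f y <= f x + (d + e) * (y - x)) /\
                     (y <= x -> f x + (d + e) * (y - x) <= f y).
Proof.
move=> /is_derive1_caratheodory [g [gE gc gx]] e0.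
have : \forall y \near x, g y < d + e.
  have gd : g @ x --> d by rewrite -gx; exact: gc.
  have := @cvgr_lt R R (nbhs x) _ g d gd (d + e).
  by rewrite ltrDl; apply.
apply: filterS => y gy.
have -> : f y = f x + g y * (y - x) by rewrite -gE addrC subrK.
split => hy; rewrite lerD2l.
- by apply: ler_wpM2r; [rewrite subr_ge0|exact: ltW].
- by apply: ler_wnM2r; [rewrite subr_le0|exact: ltW].
Qed.

Lemma near_pts (P : R -> Prop) x : (\forall z \near x, P z) ->
  exists e, 0 < e /\ forall z, `|z - x| < e -> P z.
Proof.
move=> /nbhs_ballP [e e0 He]; exists e; split => // z hz; apply: He.
by rewrite /ball /= distrC.
Qed.

Lemma fermat_min f x d : is_derive x 1 f d -> (forall y, f x <= f y) -> d = 0.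
Proof.
move=> /is_derive1_caratheodory [g [gE gc gx]] hmin.
have gd : g @ x --> d by rewrite -gx; exact: gc.
have [dlt|dgt|//] := ltgtP d 0.
- have [e [e0 He]] := near_pts _ _ (@cvgr_lt R R (nbhs x) _ g d gd 0 dlt).
  have hz : `|(x + e / 2) - x| < e.
    by rewrite addrC addKr gtr0_norm ?divr_gt0// ltr_pdivrMr// ltr_pMr// ltr1n.
  have h1 := hmin (x + e / 2); have h2 := gE (x + e / 2).
  have gl := He _ hz.
  have ex : x + e / 2 - x = e / 2 by rewrite addrC addKr.
  rewrite ex in h2.
  have : g (x + e / 2) * (e / 2) < 0 by rewrite nmulr_rlt0 // divr_gt0.
  by rewrite -h2 subr_lt0 ltNge h1.
- have [e [e0 He]] := near_pts _ _ (@cvgr_gt R R (nbhs x) _ g d gd 0 dgt).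
  have hz : `|(x - e / 2) - x| < e.
    by rewrite addrC addKr normrN gtr0_norm ?divr_gt0// ltr_pdivrMr// ltr_pMr// ltr1n.
  have h1 := hmin (x - e / 2); have h2 := gE (x - e / 2).
  have gl := He _ hz.
  have ex : x - e / 2 - x = - (e / 2) by rewrite addrC addKr.
  rewrite ex in h2.
  have : g (x - e / 2) * (- (e / 2)) < 0 by rewrite pmulr_rlt0 // oppr_lt0 divr_gt0.
  by rewrite -h2 subr_lt0 ltNge h1.
Qed.

End Calc.
Arguments dcomp {R f g x a b} _ _.
Arguments dadd {R f g x a b} _ _.
Arguments dscale {R f x a} k _.
Arguments dinv {R f x a} _ _.
Arguments dln {R f x a} _ _.
Arguments dexp {R f x a} _.
Arguments dsum {R n h x dh} _.
Arguments derive_cont {R f x a} _.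
Arguments fermat_min {R f x d} _ _.
Arguments deriv_right_lb {R f x d e} _ _.
Arguments deriv_ub {R f x d e} _ _.
Section UstarSec.
Variable R : realType.
Variables (U : R -> R) (rb : R) (p : R -> R).
Hypotheses (hrb : 0 < rb) (hpr : forall x, 0 <= p x <= 1) (hpc : continuous p)
  (hmax : forall tau r, 0 <= r <= rb ->
      U r - tau * r <= U (rb * p tau) - tau * (rb * p tau)).

Lemma rs_in (tau : R) : 0 <= rb * p tau <= rb.
Proof.
have /andP[h0 h1] := hpr tau.
by apply/andP; split; [rewrite mulr_ge0 // ltW | rewrite ler_piMr // ltW].
Qed.

Lemma Ustar_eq (tau : R) : Ustar U rb tau = tau * (rb * p tau) - U (rb * p tau).
Proof.
set r0 := rb * p tau.
set S := [set tau * r - U r | r in `[0, rb]].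
have Sr0 : S (tau * r0 - U r0).
  by exists r0 => //; rewrite /= in_itv /=; exact: rs_in.
have lb : forall y, S y -> tau * r0 - U r0 <= y.
  move=> y [r]; rewrite /= in_itv /= => hr <-.
  have := hmax tau _ hr; rewrite -/r0; lra.
apply/le_anti/andP; split.
  apply: ge_inf => //; exists (tau * r0 - U r0) => y /lb //.
apply: lb_le_inf; first by exists (tau * r0 - U r0).
by move=> y /lb.
Qed.

Lemma Ustar_le (tau r : R) : 0 <= r <= rb -> Ustar U rb tau <= tau * r - U r.
Proof. move=> hr; rewrite Ustar_eq; have := hmax tau _ hr; lra. Qed.

Lemma between_norm (a b x : R) : (a <= x <= b) \/ (b <= x <= a) ->
  `|b - x| <= `|b - a|.
Proof.
case=> /andP[h1 h2].
  rewrite !ger0_norm ?subr_ge0 //; [lra | lra].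
rewrite !ler0_norm ?subr_le0 //; [lra | lra].
Qed.

Lemma Ustar_derive (tau : R) : is_derive tau 1 (Ustar U rb) (rb * p tau).
Proof.
apply/is_derive1_caratheodory.
pose Us := Ustar U rb.
pose g z := if z == tau then rb * p tau else (Us z - Us tau) / (z - tau).
exists g; split.
- move=> z; rewrite /g; case: eqP => [->|/eqP hz]; first by rewrite !subrr mulr0.
  by rewrite divfK // subr_eq0.
- have key : forall z, `|rb * p tau - g z| <= `|rb * p tau - rb * p z|.
    move=> z; rewrite /g; case: eqP => [->|/eqP hz]; first by rewrite !subrr.
    apply: between_norm.
    have h1 := @Ustar_le z _ (rs_in tau).
    have h2 := @Ustar_le tau _ (rs_in z).
    have e1 := Ustar_eq z. have e2 := Ustar_eq tau.
    have [zlt|zgt] := ltP z tau.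
    + have d0 : z - tau < 0 by rewrite subr_lt0.
      right; rewrite ler_ndivlMr // ler_ndivrMr //; apply/andP; split; rewrite /Us; lra.
    + have d0 : 0 < z - tau by rewrite subr_gt0 lt_neqAle eq_sym hz.
      left; rewrite ler_pdivlMr // ler_pdivrMr //; apply/andP; split; rewrite /Us; lra.
  have pc : (fun z => rb * p z) @ tau --> rb * p tau.
    exact: (cvgM (cvg_cst rb) (hpc tau)).
  apply/cvgrPdist_le => e e0.
  move/cvgrPdist_le: pc => /(_ e e0); apply: filterS => z hz.
  rewrite /g eqxx; exact: le_trans (key z) hz.
- by rewrite /g eqxx.
Qed.

Lemma Ustar_cont : continuous (Ustar U rb).
Proof. move=> tau; exact: derive_cont (Ustar_derive tau). Qed.

End UstarSec.
Section DualSec.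
Context {R : realType}.
Variables (n m : nat) (eps T : R) (c : 'I_n -> R) (kappa : 'I_m -> 'I_n -> R)
  (rbar : 'I_m -> R) (p : 'I_m -> R -> R) (U : 'I_m -> R -> R).
Hypotheses (heps : 0 < eps) (hT : 0 < T) (hrbar : forall i, 0 < rbar i)
  (hp_range : forall i (x : R), 0 <= p i x <= 1)
  (hp_cont : forall i, continuous (p i))
  (hU_max : forall i (tau r : R), 0 <= r <= rbar i ->
      U i r - tau * r <= U i (rbar i * p i tau) - tau * (rbar i * p i tau)).

Definition Aj (mu : 'I_n -> R) (j : 'I_n) :=
  \sum_(i < m) rbar i * p i (phi_eps eps kappa i mu) * delta_eps eps kappa i j mu.

Lemma dmulr (f : R -> R) (x a k : R) : is_derive x 1 f a ->
  is_derive x 1 (fun y => f y * k) (a * k).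
Proof.
move=> H; have := dscale k H.
rewrite mulrC; suff -> : (fun y => k * f y) = (fun y => f y * k) by [].
by apply: funext => y; rewrite mulrC.
Qed.

Lemma dopp (f : R -> R) (x a : R) : is_derive x 1 f a ->
  is_derive x 1 (fun y => - f y) (- a).
Proof. move=> H; exact: (is_deriveN H). Qed.

Arguments dmulr {f x a} k _.
Arguments dopp {f x a} _.

Lemma sumexp_gt0 (i : 'I_m) (mu : 'I_n -> R) : (0 < n)%N ->
  0 < \sum_(j < n) expR (- (kappa i j + mu j) / eps).
Proof.
move=> hn; rewrite (bigD1 (Ordinal hn)) //=.
apply: ltr_wpDr; last exact: expR_gt0.
by apply: sumr_ge0 => j _; exact: expR_ge0.
Qed.

Lemma dphi (hn : (0 < n)%N) (i : 'I_m) (f : 'I_n -> R -> R) (df : 'I_n -> R) (s : R) :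
  (forall j, is_derive s 1 (f j) (df j)) ->
  is_derive s 1 (fun y => phi_eps eps kappa i (fun j => f j y))
    (\sum_(j < n) delta_eps eps kappa i j (fun j => f j s) * df j).
Proof.
move=> hf; rewrite /phi_eps.
have hE := sumexp_gt0 i (fun j => f j s) hn.
set E := \sum_(j < n) _ in hE.
have dj : forall j, is_derive s 1 (fun y => expR (- (kappa i j + f j y) / eps))
   (expR (- (kappa i j + f j s) / eps) * (- (0 + df j) * eps^-1)).
  move=> j.
  have h1 := @dadd _ (fun _ => kappa i j) (f j) s _ _ (dcst s (kappa i j)) (hf j).
  have h2 := dopp h1.
  have h3 := dmulr (eps^-1) h2.
  exact: (dexp h3).
have H := dscale (- eps) (dln hE (dsum dj)).
apply: (is_derive_eq H).
rewrite /delta_eps -/E mulr_sumr mulr_sumr; apply: eq_bigr => j _.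
have e0 : eps != 0 by rewrite gt_eqF.
have E0 : E != 0 by rewrite gt_eqF.
rewrite add0r; set a := expR _.
by fld.
Qed.

Lemma dDual (hn : (0 < n)%N) (f : 'I_n -> R -> R) (df : 'I_n -> R) (s : R) :
  (forall j, is_derive s 1 (f j) (df j)) -> (forall j, f j s < T) ->
  is_derive s 1 (fun y => Dual eps T c kappa rbar U (fun j => f j y))
    (\sum_(j < n) df j * (Aj (fun j => f j s) j - c j / (T - f j s))).
Proof.
move=> hf hfT; rewrite /Dual.
have dU : forall k, is_derive s 1
   (fun y => Ustar (U k) (rbar k) (phi_eps eps kappa k (fun j => f j y)))
   (rbar k * p k (phi_eps eps kappa k (fun j => f j s)) *
     \sum_(j < n) delta_eps eps kappa k j (fun j => f j s) * df j).
  move=> k.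
  have h1 := @dphi hn k f df s hf.
  have h2 := @Ustar_derive _ _ _ _ (hrbar k) (hp_range k) (hp_cont k) (hU_max k)
     (phi_eps eps kappa k (fun j => f j s)).
  exact: (@dcomp _ (Ustar (U k) (rbar k)) (fun y => phi_eps eps kappa k (fun j => f j y)) s _ _ h2 h1).
have dL : forall j, is_derive s 1 (fun y => c j * ln (1 - f j y / T))
   (c j * ((1 - f j s / T)^-1 * (0 + - (df j * T^-1)))).
  move=> j.
  have h1 := dmulr (T^-1) (hf j).
  have h2 := dopp h1.
  have h3 := dadd (dcst s 1) h2.
  have pos : 0 < 1 - f j s / T by rewrite subr_gt0 ltr_pdivrMr // mul1r.
  exact: (dscale (c j) (@dln _ (fun y => 1 - f j y / T) s _ pos h3)).
have H := dadd (dsum dU) (dsum dL).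
apply: (is_derive_eq H).
rewrite /Aj.
under [RHS]eq_bigr do rewrite mulrBr.
rewrite sumrB; congr (_ + _).
  under [RHS]eq_bigr do rewrite mulr_sumr.
  rewrite exchange_big /=; apply: eq_bigr => i _.
  rewrite mulr_sumr; apply: eq_bigr => j _; ring.
rewrite -sumrN; apply: eq_bigr => j _.
have T0 : T != 0 by rewrite gt_eqF.
have Tf : T - f j s != 0 by rewrite subr_eq0 gt_eqF.
have Tf' : 1 - f j s / T != 0.
  by rewrite gt_eqF // subr_gt0 ltr_pdivrMr // mul1r.
by fld.
Qed.

End DualSec.
Arguments dmulr {R f x a} k _.
Arguments dopp {R f x a} _.
Section MuSec.
Variable R : realType.
Variables (T c : R).
Hypotheses (hT : 0 < T) (hc : 0 < c).

Lemma mu_of_le v : v <= c -> mu_of T c v = 0.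
Proof. by rewrite /mu_of => ->. Qed.

Lemma mu_of_ge v : c <= v -> mu_of T c v = T * (1 - c / v).
Proof.
rewrite /mu_of; case: ifP => // vc cv.
have -> : v = c by apply/le_anti; rewrite vc cv.
by rewrite divff ?gt_eqF // subrr mulr0.
Qed.

Lemma mu_of_ge0 v : 0 <= mu_of T c v.
Proof.
rewrite /mu_of; case: ifP => // /negbT; rewrite -ltNge => cv.
apply: mulr_ge0; first exact: ltW.
have v0 : 0 < v by apply: lt_trans cv.
by rewrite subr_ge0 ler_pdivrMr // mul1r ltW.
Qed.

Lemma mu_of_ltT v : mu_of T c v < T.
Proof.
rewrite /mu_of; case: ifP => // /negbT; rewrite -ltNge => cv.
have v0 : 0 < v by apply: lt_trans cv.
by rewrite gtr_pMr // ltrBlDr ltrDl divr_gt0.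
Qed.

Lemma mu_of_lip v : mu_of T c v <= T / c * `|v - c|.
Proof.
rewrite /mu_of; case: ifP => [_|/negbT]; first by rewrite mulr_ge0 // divr_ge0 // ltW.
rewrite -ltNge => cv.
have v0 : 0 < v by apply: lt_trans cv.
rewrite gtr0_norm ?subr_gt0 //.
have e : T / c * (v - c) - T * (1 - c / v) = T * (v - c) ^+ 2 / (c * v).
  by field; rewrite ?gt_eqF.
rewrite -subr_ge0 e; apply: divr_ge0; last by rewrite mulr_ge0 // ltW.
by rewrite mulr_ge0 ?sqr_ge0 // ltW.
Qed.

Lemma mu_of_cont v : {for v, continuous (mu_of T c)}.
Proof.
have -> : mu_of T c = fun v => T * (1 - c / Num.max v c).
  apply: funext => y; rewrite /mu_of; case: ifP => yc.
    by rewrite max_r // divff ?gt_eqF // subrr mulr0.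
  by rewrite max_l // ltW // ltNge yc.
have h0 : Num.max v c != 0 by rewrite gt_eqF // lt_max hc orbT.
apply: cvgM; first exact: cvg_cst.
apply: cvgD; first exact: cvg_cst.
apply: cvgN; apply: cvgM; first exact: cvg_cst.
apply: continuous_cvg; first exact: inv_continuous.
apply: continuous_max; [exact: cvg_id | exact: cvg_cst].
Qed.

End MuSec.

Section Creep.
Variable R : realType.

Lemma creep (H : R -> R) (a b : R) : a <= b ->
  (forall x, a <= x <= b -> \forall y \near x, x <= y -> H x <= H y) ->
  (forall x, a <= x <= b -> \forall y \near x, y <= x -> H y <= H x) ->
  H a <= H b.
Proof.
move=> ab hr hl.
set S := [set x | a <= x <= b /\ forall y, a <= y <= x -> H a <= H y].
have Sa : S a by split; [rewrite lexx ab | move=> y /andP[h1 h2]; rewrite (@le_anti _ _ y a) ?h1 ?h2].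
have hS : has_sup S by split; [exists a | exists b => x [/andP[]]].
set xs := sup S.
have axs : a <= xs by apply: sup_upper_bound.
have xsb : xs <= b by apply: sup_le_ub; [exists a | move=> x [/andP[]]].
have below : forall y, a <= y < xs -> H a <= H y.
  move=> y /andP[ay yx].
  have [z [/andP[az zb] Hz] yz] := sup_adherent (ltac:(by rewrite subr_gt0) : 0 < xs - y) hS.
  rewrite opprB addrC subrK in yz.
  by apply: Hz; rewrite ay ltW.
have Hxs : H a <= H xs.
  have [axs'|xsa] := ltP a xs; last first.
    by have -> : xs = a by apply/le_anti; rewrite xsa axs.
  have [e [e0 He]] := near_pts _ _ (hl xs (ltac:(by rewrite axs xsb))).
  set y := Num.max a (xs - e / 2).
  have e2 : 0 < e / 2 by rewrite divr_gt0.
  have yxs : y < xs by rewrite gt_max axs' /= ltrBlDr ltrDl.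
  have ay : a <= y by rewrite le_max lexx.
  have ye : `|y - xs| < e.
    rewrite ltr0_norm ?subr_lt0 // opprB.
    apply: (@le_lt_trans _ _ (e / 2)); last by rewrite ltr_pdivrMr // ltr_pMr // ltr1n.
    by rewrite lerBlDr -lerBlDl le_max lexx orbT.
  apply: le_trans (below y _) (He y ye (ltW yxs)).
  by rewrite ay yxs.
have Sxs : S xs.
  split; first by rewrite axs xsb.
  move=> y /andP[ay yx]; have [yx'|] := ltP y xs; first by apply: below; rewrite ay yx'.
  by move=> xy; have -> : y = xs by apply/le_anti; rewrite yx xy.
have [xsb'|bxs] := ltP xs b; last by have <- : xs = b by apply/le_anti; rewrite xsb bxs.
have [e [e0 He]] := near_pts _ _ (hr xs (ltac:(by rewrite axs xsb))).
set y := Num.min b (xs + e / 2).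
have e2 : 0 < e / 2 by rewrite divr_gt0.
have xsy : xs < y by rewrite lt_min xsb' /= ltrDl.
have Sy : S y.
  split.
    apply/andP; split; [exact: le_trans axs (ltW xsy) | by rewrite ge_min lexx].
  move=> z /andP[az zy]; have [zx|xz] := leP z xs; first by case: Sxs => _; apply; rewrite az zx.
  apply: le_trans Hxs _; apply: (He z) (ltW xz).
  rewrite gtr0_norm ?subr_gt0 //.
  apply: (@le_lt_trans _ _ (e / 2)); last by rewrite ltr_pdivrMr // ltr_pMr // ltr1n.
  rewrite lerBlDl; apply: le_trans zy _; rewrite ge_min lexx orbT //.
have := sup_upper_bound hS Sy; rewrite -/xs => h.
by move: xsy; rewrite ltNge h.
Qed.
End Creep.
Section ContSec.
Context {R : realType}.

Lemma cvg_sumR {X : Type} (F : set_system X) {FF : Filter F} (k : nat)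
  (h : 'I_k -> X -> R) (l : 'I_k -> R) :
  (forall i, h i @ F --> l i) ->
  (fun y => \sum_(i < k) h i y) @ F --> \sum_(i < k) l i.
Proof.
move=> H.
elim: k h l H => [|k IH] h l H.
  rewrite big_ord0; under eq_cvg do rewrite big_ord0; exact: cvg_cst.
rewrite big_ord_recr /=; under eq_cvg do rewrite big_ord_recr /=.
apply: cvgD; last exact: H.
by apply: (IH (fun i => h (widen_ord (leqnSn k) i)) (fun i => l (widen_ord (leqnSn k) i))).
Qed.

Lemma cont_Dual {X : Type} (F : set_system X) {FF : Filter F} (n m : nat) (eps T : R)
  (c : 'I_n -> R) (kappa : 'I_m -> 'I_n -> R) (rbar : 'I_m -> R) (p U : 'I_m -> R -> R)
  (g : 'I_n -> X -> R) (l : 'I_n -> R) :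
  (0 < n)%N -> 0 < eps -> 0 < T -> (forall i, 0 < rbar i) ->
  (forall i (x : R), 0 <= p i x <= 1) -> (forall i, continuous (p i)) ->
  (forall i (tau r : R), 0 <= r <= rbar i ->
      U i r - tau * r <= U i (rbar i * p i tau) - tau * (rbar i * p i tau)) ->
  (forall j, g j @ F --> l j) -> (forall j, l j < T) ->
  (fun y => Dual eps T c kappa rbar U (fun j => g j y)) @ F --> Dual eps T c kappa rbar U l.
Proof.
move=> hn heps hT hrbar hpr hpc hU hg hl.
rewrite /Dual; apply: cvgD.
  apply: cvg_sumR => i.
  apply: (continuous_cvg _ (@Ustar_cont R (U i) (rbar i) (p i) (hrbar i) (hpr i) (hpc i) (hU i) _)).
  rewrite /phi_eps; apply: cvgM; first exact: cvg_cst.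
  apply: (continuous_cvg _ (continuous_ln (@sumexp_gt0 R n m eps kappa i l hn))).
  apply: cvg_sumR => j.
  apply: (continuous_cvg _ (@continuous_expR R _)).
  apply: cvgM; last exact: cvg_cst.
  apply: cvgN; apply: cvgD; first exact: cvg_cst.
  exact: hg.
apply: cvg_sumR => j.
apply: cvgM; first exact: cvg_cst.
have pos : 0 < 1 - l j / T by rewrite subr_gt0 ltr_pdivrMr // mul1r.
apply: (continuous_cvg _ (continuous_ln pos)).
apply: cvgD; first exact: cvg_cst.
apply: cvgN; apply: cvgM; last exact: cvg_cst.
exact: hg.
Qed.

End ContSec.
Section Main.
Variable R : realType.
Variables (n m : nat) (c : 'I_n -> R) (T eps : R) (kappa : 'I_m -> 'I_n -> R)
  (rbar : 'I_m -> R) (p U : 'I_m -> R -> R) (q : R -> 'I_n -> R).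
Hypotheses (hn : (0 < n)%N) (hc : forall j, 0 < c j) (hT : 0 < T) (heps : 0 < eps)
  (hrbar : forall i, 0 < rbar i)
  (hp_cont : forall i, continuous (p i))
  (hp_range : forall i (x : R), 0 <= p i x <= 1)
  (hU_max : forall i (tau r : R), 0 <= r <= rbar i ->
      U i r - tau * r <= U i (rbar i * p i tau) - tau * (rbar i * p i tau))
  (hq_ode : forall t : R, 0 < t -> forall j : 'I_n,
      is_derive t 1 (fun s => q s j)
        (\sum_(i < m) rbar i * p i (phi_eps eps kappa i (mu_vec T c (q t)))
                        * delta_eps eps kappa i j (mu_vec T c (q t))
         - q t j / T))
  (hq_cont0 : forall j, (fun s => q s j) @ at_right 0 --> q 0 j).

Let A (mu : 'I_n -> R) (j : 'I_n) := @Aj R n m eps kappa rbar p mu j.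
Let qd t j := A (mu_vec T c (q t)) j - q t j / T.
Let mj j s := mu_of T (c j) (q s j).
Let Gf (f : 'I_n -> R -> R) y := Dual eps T c kappa rbar U (fun j => f j y).

Lemma dD (f : 'I_n -> R -> R) (df : 'I_n -> R) (s : R) :
  (forall j, is_derive s 1 (f j) (df j)) -> (forall j, f j s < T) ->
  is_derive s 1 (Gf f)
    (\sum_(j < n) df j * (A (fun j => f j s) j - c j / (T - f j s))).
Proof. move=> h1 h2; exact: (@dDual R n m eps T c kappa rbar p U heps hT hrbar hp_range hp_cont hU_max hn f df s h1 h2). Qed.

Lemma qder (t : R) (j : 'I_n) : 0 < t -> is_derive t 1 (fun s => q s j) (qd t j).
Proof. move=> t0; exact: (hq_ode t t0 j). Qed.

Lemma hq_der (x : R) (j : 'I_n) : 0 < x -> 0 < q x j ->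
  is_derive x 1 (fun s => T * (1 - c j / q s j)) (T * c j * qd x j / q x j ^+ 2).
Proof.
move=> x0 q0.
have qn0 : q x j != 0 by rewrite gt_eqF.
have h1 := @dinv _ (fun s => q s j) x _ qn0 (qder x j x0).
have h2 := dscale (c j) h1.
have h3 := dopp h2.
have h4 := dadd (dcst x 1) h3.
have h5 := dscale T h4.
apply: (is_derive_eq h5).
by fld.
Qed.

Lemma m_zero_der (x : R) (j : 'I_n) : 0 < x -> q x j = c j -> qd x j = 0 -> is_derive x 1 (mj j) 0.
Proof.
move=> x0 qc qd0.
have [g [gE gc gx]] := (is_derive1_caratheodory _ _ _).1 (qder x j x0).
have mx : mj j x = 0 by rewrite /mj qc mu_of_le.
apply/is_derive1_caratheodory.
exists (fun y => if y == x then 0 else mj j y / (y - x)); split.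
- move=> z; case: eqP => [->|/eqP zx]; first by rewrite !subrr mulr0.
  by rewrite mx subr0 divfK // subr_eq0.
- apply/cvgrPdist_le => e e0; rewrite eqxx.
  have gd : g @ x --> 0.
    have gc' : g @ x --> g x := gc.
    by rewrite gx qd0 in gc'.
  have ec : 0 < e * c j / T by rewrite divr_gt0 // mulr_gt0.
  move/cvgrPdist_le: gd => /(_ _ ec); apply: filterS => y hy.
  case: eqP => [_|/eqP yx]; first by rewrite subrr normr0 ltW.
  rewrite sub0r normrN normrM normfV ger0_norm; last exact: mu_of_ge0.
  have yx0 : 0 < `|y - x| by rewrite normr_gt0 subr_eq0.
  rewrite ler_pdivrMr //.
  apply: le_trans (@mu_of_lip _ T (c j) hT (hc j) (q y j)) _.
  rewrite -qc gE normrM mulrA ler_wpM2r //.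
  rewrite sub0r normrN in hy.
  rewrite -ler_pdivlMl ?divr_gt0 //.
  apply: le_trans hy _; rewrite le_eqVlt; apply/orP; left; apply/eqP.
    have cj0 : c j != 0 by rewrite gt_eqF.
    have T0 : T != 0 by rewrite gt_eqF.
    by rewrite qc; fld.
  by rewrite qc.
- by rewrite eqxx.
Qed.

Lemma q_cont (x : R) (j : 'I_n) : 0 < x -> (fun s => q s j) @ x --> q x j.
Proof. move=> x0; exact: (derive_cont (qder x j x0)). Qed.

Lemma mj_der1 (t : R) (j : 'I_n) : 0 < t -> derivable (mj j) t 1 ->
  is_derive t 1 (mj j) (if c j < q t j then T * c j * qd t j / q t j ^+ 2 else 0).
Proof.
move=> t0 hd; case: ifP => cq.
  have qg : \forall y \near t, c j < q y j.
    exact: (@cvgr_gt R R (nbhs t) _ (fun s => q s j) _ (q_cont t j t0) _ cq).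
  apply: (near_eq_is_derive _ (hq_der t j t0 (lt_trans (hc j) cq))).
  apply: filterS qg => y cy.
  by rewrite /mj mu_of_ge // ltW.
have hD : is_derive t 1 (mj j) ('D_1 (mj j) t) by apply: DeriveDef.
have := fermat_min hD.
have mt : mj j t = 0 by rewrite /mj mu_of_le // leNgt cq.
rewrite mt => /(_ (fun y => @mu_of_ge0 R T (c j) hT (hc j) _)) dz.
by rewrite -dz.
Qed.

Lemma part1 (t : R) : 0 < t -> (forall j, derivable (mj j) t 1) ->
  is_derive t 1 (Gf mj)
   (\sum_(j < n | c j < q t j) T * c j * (qd t j / q t j) ^+ 2).
Proof.
move=> t0 hd.
have H := @dD mj _ t (fun j => mj_der1 t j t0 (hd j)) (fun j => @mu_of_ltT R T (c j) hT (hc j) (q t j)).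
apply: (is_derive_eq H).
rewrite [RHS]big_mkcond; apply: eq_bigr => j _ /=.
case: ifP => cq; last by rewrite mul0r.
have Ae : A (fun j => mj j t) j = qd t j + q t j / T by rewrite /qd subrK.
rewrite Ae /mj mu_of_ge ?ltW //.
have q0 : q t j != 0 by rewrite gt_eqF // (lt_trans (hc j)).
have cj0 : c j != 0 by rewrite gt_eqF.
have T0 : T != 0 by rewrite gt_eqF.
have e : T - T * (1 - c j / q t j) = T * c j / q t j by fld.
rewrite e; by fld.
Qed.

Definition good (x : R) (side : R -> Prop) (j : 'I_n) (fd : (R -> R) * R) :=
  [/\ is_derive x 1 fd.1 fd.2, fd.1 x = mj j x,
      (\forall y \near x, side y -> fd.1 y = mj j y) &
      0 <= fd.2 * (A (fun k => mj k x) j - c j / (T - mj j x))].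

Lemma rep_h (x : R) (j : 'I_n) (side : R -> Prop) : 0 < x -> c j <= q x j ->
  (\forall y \near x, side y -> c j <= q y j) -> exists fd, good x side j fd.
Proof.
move=> x0 cq hnear.
have q0 : 0 < q x j by apply: lt_le_trans cq.
exists ((fun s => T * (1 - c j / q s j)), T * c j * qd x j / q x j ^+ 2); split => /=.
- exact: hq_der.
- by rewrite /mj mu_of_ge.
- by apply: filterS hnear => y hy sy; rewrite /mj mu_of_ge // hy.
have Ae : A (fun k => mj k x) j = qd x j + q x j / T by rewrite /qd subrK.
rewrite Ae /mj mu_of_ge //.
have qn0 : q x j != 0 by rewrite gt_eqF.
have cj0 : c j != 0 by rewrite gt_eqF.
have T0 : T != 0 by rewrite gt_eqF.
have e : T - T * (1 - c j / q x j) = T * c j / q x j by fld.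
have -> : T * c j * qd x j / q x j ^+ 2 * (qd x j + q x j / T - c j / (T - T * (1 - c j / q x j)))
   = T * c j * (qd x j / q x j) ^+ 2 by rewrite e; fld.
by rewrite mulr_ge0 ?sqr_ge0 // mulr_ge0 // ltW.
Qed.

Lemma rep_0 (x : R) (j : 'I_n) (side : R -> Prop) : q x j <= c j ->
  (\forall y \near x, side y -> q y j <= c j) -> exists fd, good x side j fd.
Proof.
move=> qc hnear.
exists ((fun _ => 0), 0); split => /=.
- exact: dcst.
- by rewrite /mj mu_of_le.
- by apply: filterS hnear => y hy sy; rewrite /mj mu_of_le // hy.
by rewrite mul0r.
Qed.

Lemma rep_m (x : R) (j : 'I_n) (side : R -> Prop) : 0 < x -> q x j = c j -> qd x j = 0 ->
  exists fd, good x side j fd.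
Proof.
move=> x0 qc qd0.
exists (mj j, 0); split => /=.
- exact: m_zero_der.
- by [].
- by apply: filterE => y _.
by rewrite mul0r.
Qed.

Lemma local_rep (x : R) (j : 'I_n) (b : bool) : 0 < x ->
  exists fd, good x (fun y => if b then x <= y else y <= x) j fd.
Proof.
move=> x0.
have qc := q_cont x j x0.
have [cq|qc'|qce] := ltgtP (c j) (q x j).
- apply: rep_h => //; first exact: ltW.
  apply: filterS (@cvgr_gt R R (nbhs x) _ (fun s => q s j) _ qc _ cq).
  by move=> y hy _; exact: ltW.
- apply: rep_0; first exact: ltW.
  apply: filterS (@cvgr_lt R R (nbhs x) _ (fun s => q s j) _ qc _ qc').
  by move=> y hy _; exact: ltW.
have hd := qder x j x0.
have [dlt|dgt|d0] := ltgtP (qd x j) 0; last first.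
- exact: rep_m (esym qce) d0.
-
  have e0 : 0 < qd x j := dgt.
  have hlb := deriv_right_lb hd e0.
  rewrite subrr in hlb.
  case: b.
    apply: rep_h => //; first by rewrite qce.
    apply: filterS hlb => y [h1 _] xy; by move: (h1 xy); rewrite mul0r addr0 -qce.
  apply: rep_0; first by rewrite qce.
  apply: filterS hlb => y [_ h2] yx; by move: (h2 yx); rewrite mul0r addr0 -qce.
-
  have e0 : 0 < - qd x j by rewrite oppr_gt0.
  have hub := deriv_ub hd e0.
  rewrite subrr in hub.
  case: b.
    apply: rep_0; first by rewrite qce.
    apply: filterS hub => y [h1 _] xy; by move: (h1 xy); rewrite mul0r addr0 -qce.
  apply: rep_h => //; first by rewrite qce.
  apply: filterS hub => y [_ h2] yx; by move: (h2 yx); rewrite mul0r addr0 -qce.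
Qed.

Lemma local_G (x : R) (b : bool) : 0 < x ->
  exists G : R -> R, exists d : R,
    [/\ 0 <= d, is_derive x 1 G d, G x = Gf mj x &
     \forall y \near x, (if b then x <= y else y <= x) -> G y = Gf mj y].
Proof.
move=> x0.
have [F hF] := boolp.choice (fun j => local_rep x j b x0).
pose f j := (F j).1; pose df j := (F j).2.
have hder : forall j, is_derive x 1 (f j) (df j) by move=> j; case: (hF j).
have hfx : forall j, f j x = mj j x by move=> j; case: (hF j).
have ef : (fun k => f k x) = (fun k => mj k x) by apply: funext => k; exact: hfx.
have hT' : forall j, f j x < T.
  by move=> j; rewrite hfx; exact: (@mu_of_ltT R T (c j) hT (hc j)).
have H := @dD f df x hder hT'.
exists (Gf f); exists (\sum_(j < n) df j * (A (fun j => f j x) j - c j / (T - f j x))).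
split => //.
- rewrite ef; apply: sumr_ge0 => j _; rewrite hfx; by case: (hF j).
- by rewrite /Gf ef.
have hn' : forall j, \forall y \near x, (if b then x <= y else y <= x) -> f j y = mj j y.
  by move=> j; case: (hF j).
have hall := filter_forall (nbhs_filter x) hn'.
apply: filterS hall => y hy sy; rewrite /Gf; congr Dual; apply: funext => j; exact: hy.
Qed.

Lemma local_H (x d0 : R) : 0 < x -> 0 < d0 ->
  (\forall y \near x, x <= y -> Gf mj x + d0 * x <= Gf mj y + d0 * y) /\
  (\forall y \near x, y <= x -> Gf mj y + d0 * y <= Gf mj x + d0 * x).
Proof.
move=> x0 dp; split.
  have [G [d [dge hG Gx hnear]]] := local_G x true x0.
  have hl := @deriv_right_lb _ G x d d0 hG dp.
  apply: filterS2 hnear hl => y h1 [h2 _] xy.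
  rewrite -(h1 xy) -Gx; have := h2 xy.
  have := mulr_ge0 dge (ltac:(by rewrite subr_ge0) : 0 <= y - x).
  by lra.
have [G [d [dge hG Gx hnear]]] := local_G x false x0.
have hl := @deriv_right_lb _ G x d d0 hG dp.
apply: filterS2 hnear hl => y h1 [_ h2] yx.
rewrite -(h1 yx) -Gx; have := h2 yx.
have := mulr_ge0 dge (ltac:(by rewrite subr_ge0) : 0 <= x - y).
by lra.
Qed.

Lemma mono_pos (s t : R) : 0 < s -> s <= t -> Gf mj s <= Gf mj t.
Proof.
move=> s0 st; apply/ler_addgt0Pr => e e0.
have K0 : 0 < t - s + 1 by apply: ltr_wpDl; [rewrite subr_ge0 | exact: ltr01].
set dl := e / (t - s + 1).
have dl0 : 0 < dl by rewrite divr_gt0.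
have hc1 : forall x, s <= x <= t -> \forall y \near x, x <= y ->
    Gf mj x + dl * x <= Gf mj y + dl * y.
  move=> x /andP[sx _]; exact: (local_H x dl (lt_le_trans s0 sx) dl0).1.
have hc2 : forall x, s <= x <= t -> \forall y \near x, y <= x ->
    Gf mj y + dl * y <= Gf mj x + dl * x.
  move=> x /andP[sx _]; exact: (local_H x dl (lt_le_trans s0 sx) dl0).2.
have := @creep R (fun y => Gf mj y + dl * y) s t st hc1 hc2.
have : dl * (t - s) <= e.
  rewrite /dl mulrAC ler_pdivrMr // ler_pM2l // lerDl ler01 //.
lra.
Qed.

Lemma mono0 (t : R) : 0 < t -> Gf mj 0 <= Gf mj t.
Proof.
move=> t0.
have cv : Gf mj y @[y --> 0^'+] --> Gf mj 0.
  apply: (@cont_Dual R R (at_right 0) _ n m eps T c kappa rbar p U mj (fun j => mj j 0)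
     hn heps hT hrbar hp_range hp_cont hU_max).
    move=> j; apply: (continuous_cvg _ (@mu_of_cont R T (c j) (hc j) (q 0 j))).
    exact: hq_cont0.
  by move=> j; exact: (@mu_of_ltT R T (c j) hT (hc j)).
rewrite -(cvg_lim (@Rhausdorff R) cv).
apply: limr_le; first by apply/cvg_ex; exists (Gf mj 0).
apply: filterS2 (nbhs_right_gt 0) (nbhs_right_le t0) => y y0 yt.
exact: mono_pos y0 yt.
Qed.

Lemma main_result :
  let curT := [set t : R | 0 < t /\ forall j : 'I_n,
      derivable (fun s => mu_of T (c j) (q s j)) t 1 /\
      derivable (fun s => c j * ln (1 - mu_of T (c j) (q s j) / T)) t 1] in
  let Dq := fun s => Dual eps T c kappa rbar U (mu_vec T c (q s)) in
  (forall t : R, curT t ->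
     is_derive t 1 Dq
       (\sum_(j < n | c j < q t j)
           T * c j * (derive1 (fun s => q s j) t / q t j) ^+ 2) /\
     0 <= \sum_(j < n | c j < q t j)
           T * c j * (derive1 (fun s => q s j) t / q t j) ^+ 2) /\
  (forall s t : R, 0 <= s -> s <= t -> Dq s <= Dq t).
Proof.
move=> curT Dq; split.
  move=> t [t0 hd].
  have e : forall j, derive1 (fun s => q s j) t = qd t j.
    by move=> j; rewrite derive1E; case: (qder t j t0) => _ ->.
  under eq_bigr do rewrite e.
  split; first exact: (part1 t t0 (fun j => (hd j).1)).
  apply: sumr_ge0 => j _; apply: mulr_ge0; last exact: sqr_ge0.
  by rewrite mulr_ge0 // ltW.
move=> s t s0 st.
have [sp|] := ltP 0 s; first exact: mono_pos.
move=> s0'; have -> : s = 0 by apply/le_anti; rewrite s0 s0'.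
have [tp|] := ltP 0 t; first exact: mono0.
move=> t0'; have -> : t = 0 by apply/le_anti; rewrite t0' (le_trans s0 st).
by [].
Qed.

End Main.

Theorem proposition6 (R : realType) (n m : nat) (hn : (0 < n)%N) (hm : (0 < m)%N)
  (c : 'I_n -> R) (T eps : R) (kappa : 'I_m -> 'I_n -> R) (rbar : 'I_m -> R)
  (p : 'I_m -> R -> R) (U : 'I_m -> R -> R) (q : R -> 'I_n -> R)
  (hc : forall j, 0 < c j) (hT : 0 < T) (heps : 0 < eps)
  (hkappa : forall i j, 0 <= kappa i j) (hrbar : forall i, 0 < rbar i)
  (* p_i : R -> [0,1] continuous, nonincreasing, = 1 on (-oo,0], -> 0 at +oo *)
  (hp_cont : forall i, continuous (p i))
  (hp_range : forall i (x : R), 0 <= p i x <= 1)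
  (hp_noninc : forall i (x y : R), x <= y -> p i y <= p i x)
  (hp_one : forall i (x : R), x <= 0 -> p i x = 1)
  (hp_lim : forall i, p i x @[x --> +oo] --> 0)
  (* U_i : [0, rbar_i] -> R continuous, nondecreasing, strictly concave *)
  (hU_cont : forall i, {within `[0, rbar i], continuous (U i)})
  (hU_nondec : forall i (x y : R), 0 <= x -> x <= y -> y <= rbar i -> U i x <= U i y)
  (hU_sconc : forall i (x y l : R), 0 <= x <= rbar i -> 0 <= y <= rbar i -> x != y ->
      0 < l < 1 -> l * U i x + (1 - l) * U i y < U i (l * x + (1 - l) * y))
  (* rbar_i p_i(tau) maximizes U_i(r) - tau r over [0, rbar_i] *)
  (hU_max : forall i (tau r : R), 0 <= r <= rbar i ->
      U i r - tau * r <= U i (rbar i * p i tau) - tau * (rbar i * p i tau))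
  (* q is a solution of the ODE on [0, +oo) *)
  (hq_cont0 : forall j, (fun s => q s j) @ at_right 0 --> q 0 j)
  (hq_ode : forall t : R, 0 < t -> forall j : 'I_n,
      is_derive t 1 (fun s => q s j)
        (\sum_(i < m) rbar i * p i (phi_eps eps kappa i (mu_vec T c (q t)))
                        * delta_eps eps kappa i j (mu_vec T c (q t))
         - q t j / T)) :
  let curT := [set t : R | 0 < t /\ forall j : 'I_n,
      derivable (fun s => mu_of T (c j) (q s j)) t 1 /\
      derivable (fun s => c j * ln (1 - mu_of T (c j) (q s j) / T)) t 1] in
  let Dq := fun s => Dual eps T c kappa rbar U (mu_vec T c (q s)) in
  (forall t : R, curT t ->
     is_derive t 1 Dq
       (\sum_(j < n | c j < q t j)
           T * c j * (derive1 (fun s => q s j) t / q t j) ^+ 2) /\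
     0 <= \sum_(j < n | c j < q t j)
           T * c j * (derive1 (fun s => q s j) t / q t j) ^+ 2) /\
  (forall s t : R, 0 <= s -> s <= t -> Dq s <= Dq t).
Proof.
exact: (@main_result R n m c T eps kappa rbar p U q hn hc hT heps hrbar
  hp_cont hp_range hU_max hq_ode hq_cont0).
Qed.
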